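(* Let $V$, $f$, $\mathcal{A}$, $k,\tau,\eta$ be as described in the context (in particular $f$ normalized monotone submodular, $\mathcal{A}$ satisfying the $\beta$-iterative property, $\eta\ge4(\log k+1)$, $2\le\tau\le\frac{k}{3\eta(\log k+2)}$). Let $Y$ and $Z$ be buckets constructed by PRo such that $Z$ is constructed at a later time than $Y$, and let $E_Y\subseteq Y$ and $E_Z\subseteq Z$ be arbitrary. Let $X\subseteq V$ be any set and $\alpha\ge0$ a constant such that $$f((Y\setminus E_Y)\cup X)\ge\frac{1}{1+\alpha}f(Y)\quad\text{and}\quad f(E_Y\mid X)\le\alpha f(X).$$ Then, with $\alpha_{\mathrm{next}}=\beta\frac{|E_Z|}{|Y|}(1+\alpha)+\alpha$, $$f(E_Z\mid(Y\setminus E_Y)\cup X)\le\alpha_{\mathrm{next}}\,f((Y\setminus E_Y)\cup X)$$ and $$f((Z\setminus E_Z)\cup(Y\setminus E_Y)\cup X)\ge\frac{1}{1+\alpha_{\mathrm{next}}}f(Z).$$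
   Context: Notation: $f(Y\mid X):=f(X\cup Y)-f(X)$; logarithms are to base 2. $V$ is a finite ground set, $f:2^V\to\mathbb{R}_{\ge0}$ is normalized ($f(\emptyset)=0$), monotone and submodular. A subroutine $\mathcal{A}(k',T)$ outputs an ordered set $(v_1,\dots,v_{k'})$ of elements of $T\subseteq V$; $\mathcal{A}_i(T)=\{v_1,\dots,v_i\}$; it satisfies the $\beta$-iterative property ($\beta\ge1$) if $f(\mathcal{A}_{i+1}(T))-f(\mathcal{A}_i(T))\ge\frac1\beta\max_{v\in T}f(v\mid\mathcal{A}_i(T))$ for all $T,i$. Algorithm PRo (inputs $V,k,\tau,\eta\in\mathbb{N}_+,\mathcal{A}$): $S_0\leftarrow\emptyset$; for $i=0,\dots,\lceil\log\tau\rceil$ and for $j=1,\dots,\lceil\tau/2^i\rceil$: $B_j\leftarrow\mathcal{A}(2^i\eta,V\setminus S_0)$, $S_0\leftarrow S_0\cup B_j$ (each such $B_j$ is a bucket of partition $i$); then $S_1\leftarrow\mathcal{A}(k-|S_0|,V\setminus S_0)$; output $S=S_0\cup S_1$. *)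

(* Defs.v *)
From HB Require Import structures.
From mathcomp Require Import all_boot all_order all_algebra.
From mathcomp Require Import reals exp.
Set Implicit Arguments. Unset Strict Implicit. Unset Printing Implicit Defensive.
Import Order.TTheory GRing.Theory Num.Theory.
Local Open Scope ring_scope.

Section Defs.
Variables (R : realType) (V : finType).

Definition marg (f : {set V} -> R) (Y X : {set V}) : R := f (X :|: Y) - f X.

Definition normalized (f : {set V} -> R) := f set0 = 0.
Definition nonneg_fun (f : {set V} -> R) := forall S, 0 <= f S.
Definition monotone (f : {set V} -> R) := forall A B : {set V}, A \subset B -> f A <= f B.
Definition submodular (f : {set V} -> R) :=
  forall A B : {set V}, f (A :|: B) + f (A :&: B) <= f A + f B.

(* A subroutine: A k' T is the ordered output (v_1,...,v_k'') *)
Definition subroutine := nat -> {set V} -> seq V.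

Definition prefix_set (s : seq V) (i : nat) : {set V} := [set x in take i s].

Definition valid_subroutine (A : subroutine) :=
  forall k' (T : {set V}), [/\ uniq (A k' T), {subset A k' T <= T} &
                   size (A k' T) = minn k' #|T| ].

Definition beta_iterative (f : {set V} -> R) (A : subroutine) (beta : R) :=
  forall k' (T : {set V}) i, (i < size (A k' T))%N ->
    forall v, v \in T ->
      beta^-1 * marg f [set v] (prefix_set (A k' T) i)
        <= f (prefix_set (A k' T) i.+1) - f (prefix_set (A k' T) i).

Definition ceil_div (a b : nat) : nat := ((a + b.-1) %/ b)%N.

(* sizes of the buckets built by PRo, in order of construction:
   for i = 0..ceil(log tau), ceil(tau/2^i) buckets of size 2^i eta *)
Definition pro_sizes (tau eta : nat) : seq nat :=
  flatten [seq nseq (ceil_div tau (2 ^ i)) (2 ^ i * eta)%N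
          | i <- iota 0 (up_log 2 tau).+1].

Fixpoint pro_buckets_from (A : subroutine) (S0 : {set V}) (sz : seq nat)
    : seq {set V} :=
  match sz with
  | [::] => [::]
  | s :: sz' => let B := [set x in A s (~: S0)] in
                B :: pro_buckets_from A (S0 :|: B) sz'
  end.

Definition pro_buckets (A : subroutine) (tau eta : nat) : seq {set V} :=
  pro_buckets_from A set0 (pro_sizes tau eta).

End Defs.

Definition log2 {R : realType} (x : R) : R := ln x / ln 2.

(* Main.v *)
Require Import Defs.
From HB Require Import structures.
From mathcomp Require Import all_boot all_order all_algebra.
From mathcomp Require Import reals exp.
From mathcomp Require Import ring lra.
Import Order.TTheory GRing.Theory Num.Theory.
Local Open Scope ring_scope.
Section Helpers.
Variables (R : realType) (V : finType) (f : {set V} -> R).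
Hypothesis f_mono : monotone f.
Hypothesis f_sub : submodular f.

Lemma marg_dim (S A B : {set V}) : A \subset B -> marg f S B <= marg f S A.
Proof.
move=> AB; rewrite /marg.
have h := f_sub (A :|: S) B.
have e1 : A :|: S :|: B = B :|: S.
  by rewrite setUAC (setUidPr AB).
have h2 : f A <= f ((A :|: S) :&: B).
  by apply: f_mono; rewrite subsetI subsetUl AB.
rewrite e1 in h; lra.
Qed.

Lemma marg_sub (S Y : {set V}) : marg f S Y <= \sum_(e in S) marg f [set e] Y.
Proof.
elim: {S}_.+1 {-2}S (ltnSn #|S|) => // n IH S hS.
case: (set_0Vmem S) => [->|[x xS]].
  by rewrite big_set0 /marg setU0 subrr.
rewrite (bigD1 x xS) /=.
have -> : \sum_(i in S | i != x) marg f [set i] Y = \sum_(i in S :\ x) marg f [set i] Y.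
  by apply: eq_bigl => i; rewrite !inE andbC.
have hS' : (#|S :\ x| < n)%N.
  by rewrite -ltnS (leq_trans _ hS) // ltnS (cardsD1 x S) xS.
have := IH _ hS'.
have := @marg_dim [set x] _ _ (subsetUl Y (S :\ x)).
have eS : S = x |: (S :\ x) by rewrite setD1K.
rewrite /marg.
have -> : Y :|: S = Y :|: (S :\ x) :|: [set x].
  by rewrite {1}eS setUCA setUC.
lra.
Qed.

End Helpers.
Section Buckets.
Variables (V : finType) (A : subroutine V).
Hypothesis A_valid : valid_subroutine A.

Lemma size_buckets S sz : size (pro_buckets_from A S sz) = size sz.
Proof. by elim: sz S => //= s sz IH S; rewrite IH. Qed.

Lemma head_sub s S : [set x in A s (~: S)] \subset ~: S.
Proof.
have [_ hs _] := A_valid s (~: S).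
by apply/subsetP => x; rewrite inE => /hs.
Qed.

Lemma buckets_sub sz S j : nth set0 (pro_buckets_from A S sz) j \subset ~: S.
Proof.
elim: sz S j => [|s sz IH] S j /=; first by rewrite nth_nil sub0set.
case: j => [|j] /=; first exact: head_sub.
apply: subset_trans (IH _ j) _.
by rewrite setCU subsetIl.
Qed.

Lemma buckets_struct sz S p q : (p < q)%N -> (q < size sz)%N ->
  exists S', nth set0 (pro_buckets_from A S sz) p = [set x in A (nth 0%N sz p) (~: S')]
   /\ nth set0 (pro_buckets_from A S sz) q \subset ~: S' :\: nth set0 (pro_buckets_from A S sz) p.
Proof.
elim: sz S p q => [|s sz IH] S p q //= hpq hq.
case: p hpq => [|p] hpq.
  exists S; split => //.
  case: q hpq hq => [|q] // _ hq /=.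
  by rewrite setDE -setCU setUC buckets_sub.
case: q hpq hq => [|q] // hpq hq /=.
exact: IH.
Qed.

End Buckets.
Section Key.
Variables (R : realType) (V : finType) (f : {set V} -> R) (A : subroutine V) (beta : R).
Hypothesis f_norm : normalized f.
Hypothesis f_mono : monotone f.
Hypothesis f_sub : submodular f.
Hypothesis A_valid : valid_subroutine A.
Hypothesis beta_ge1 : 1 <= beta.
Hypothesis A_iter : beta_iterative f A beta.

Lemma key s (T : {set V}) (e : V) : (0 < s)%N -> e \in T ->
  (0 < #|[set x in A s T]|)%N /\
  #|[set x in A s T]|%:R * marg f [set e] [set x in A s T] <= beta * f [set x in A s T].
Proof.
move=> s0 eT.
set lst := A s T; set Y := [set x in lst].
have [u _ sz] := A_valid s T.
have cY : #|Y| = size lst by rewrite cardsE; apply/card_uniqP.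
have T0 : (0 < #|T|)%N by apply/card_gt0P; exists e.
have n0 : (0 < size lst)%N by rewrite /lst sz leq_min s0 T0.
split; first by rewrite cY.
have pn : prefix_set lst (size lst) = Y by rewrite /prefix_set take_size.
have p0 : prefix_set lst 0 = set0 by apply/setP => x; rewrite /prefix_set take0 !inE.
have tel := telescope_sumr (fun i => f (prefix_set lst i)) (leq0n (size lst)).
rewrite /= pn p0 f_norm subr0 in tel.
have : \sum_(0 <= i < size lst) (beta^-1 * marg f [set e] Y)
   <= \sum_(0 <= i < size lst) (f (prefix_set lst i.+1) - f (prefix_set lst i)).
  apply: ler_sum_nat => i /andP [_ hi].
  have hh := @A_iter s T i hi e eT. apply: le_trans hh.
  apply: ler_wpM2l; first by rewrite invr_ge0 (le_trans ler01 beta_ge1).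
  apply: marg_dim => //.
  by apply/subsetP => x; rewrite /prefix_set !inE => /mem_take.
rewrite tel sumr_const_nat subn0 cY -mulr_natl.
move=> h.
have bpos : 0 < beta := lt_le_trans ltr01 beta_ge1.
have := ler_wpM2l (ltW bpos) h.
rewrite mulrnAr mulrA mulfV ?gt_eqF // mul1r mulr1 mulr_natl. by [].
Qed.

End Key.

Theorem lemma5 (R : realType) (V : finType) (f : {set V} -> R)
  (A : subroutine V) (beta : R) (k tau eta : nat)
  (f_norm : normalized f) (f_nonneg : nonneg_fun f)
  (f_mono : monotone f) (f_sub : submodular f)
  (A_valid : valid_subroutine A)
  (beta_ge1 : 1 <= beta) (A_iter : beta_iterative f A beta)
  (heta : 4 * (log2 (k%:R : R) + 1) <= eta%:R)
  (htau_lo : (2 <= tau)%N)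
  (htau_hi : tau%:R <= k%:R / (3 * eta%:R * (log2 (k%:R : R) + 2)))
  (p q : nat) (hpq : (p < q)%N) (hq : (q < size (pro_buckets A tau eta))%N)
  (EY EZ X : {set V}) (alpha : R) (halpha : 0 <= alpha) :
  let Y := nth set0 (pro_buckets A tau eta) p in
  let Z := nth set0 (pro_buckets A tau eta) q in
  EY \subset Y -> EZ \subset Z ->
  f ((Y :\: EY) :|: X) >= (1 + alpha)^-1 * f Y ->
  marg f EY X <= alpha * f X ->
  let alpha_next := beta * (#|EZ|%:R / #|Y|%:R) * (1 + alpha) + alpha in
  marg f EZ ((Y :\: EY) :|: X) <= alpha_next * f ((Y :\: EY) :|: X) /\
  f ((Z :\: EZ) :|: (Y :\: EY) :|: X) >= (1 + alpha_next)^-1 * f Z.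
Proof.
move=> Y Z hEY hEZ hY hX alpha_next.
have eta0 : (0 < eta)%N.
  case: eta htau_hi {heta hq Y Z hEY hEZ hY hX alpha_next} => // h.
  rewrite mulr0n mulr0 mul0r invr0 mulr0 lern0 in h.
  by move: htau_lo; rewrite (eqP h).
have hq' : (q < size (pro_sizes tau eta))%N by rewrite /pro_buckets size_buckets in hq.
have [S' [eY hZ]] := @buckets_struct V A A_valid (pro_sizes tau eta) set0 p q hpq hq'.
set s := nth 0%N (pro_sizes tau eta) p.
have s0 : (0 < s)%N.
  have : s \in pro_sizes tau eta by apply: mem_nth; exact: ltn_trans hq'.
  case/flatten_mapP => i _; rewrite mem_nseq => /andP [_ /eqP ->].
  by rewrite muln_gt0 expn_gt0 eta0.
rewrite -/(pro_buckets A tau eta) -/Y -/Z in eY hZ.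
have bpos : 0 < beta := lt_le_trans ltr01 beta_ge1.
set g := beta * (#|EZ|%:R / #|Y|%:R).
have g0 : 0 <= g by rewrite /g mulr_ge0 ?divr_ge0 ?ler0n // ltW.
have hfY : 0 <= f Y := f_nonneg Y.
have h2 : marg f EZ Y <= g * f Y.
  apply: le_trans (@marg_sub R V f f_mono f_sub EZ Y) _.
  apply: (@le_trans _ _ (\sum_(e in EZ) (beta * f Y / #|Y|%:R))).
    apply: ler_sum => e eEZ.
    have eT : e \in ~: S'.
      have := subsetP hZ e (subsetP hEZ e eEZ); rewrite inE => /andP [_ ->] //.
    have [c0 hc] := @key R V f A beta f_norm f_mono f_sub A_valid beta_ge1 A_iter s (~: S') e s0 eT.
    rewrite -eY in c0 hc.
    by rewrite ler_pdivlMr ?ltr0n // mulrC.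
  rewrite sumr_const -mulr_natr /g.
  rewrite le_eqVlt; apply/orP; left; apply/eqP.
  rewrite mul1r -mulr_natr; ring.
set W := (Y :\: EY) :|: X.
have fW0 : 0 <= f W := f_nonneg W.
have fXW : f X <= f W by apply: f_mono; rewrite subsetUr.
have hYW : f Y <= (1 + alpha) * f W.
  have := ler_wpM2l (ltW (_ : 0 < 1 + alpha)) hY.
  rewrite mulrA mulfV ?mul1r; last by rewrite gt_eqF //; lra.
  by apply; lra.
have e3 : W :|: EY = Y :|: X.
  apply/setP => x; rewrite /W !inE; have := subsetP hEY x.
  by case: (x \in EY) (x \in Y) (x \in X) => [] [] [] //= /(_ isT).
have h3 : marg f EY W <= marg f EY X.
  by apply: (@marg_dim R V f f_mono f_sub); rewrite subsetUr.
have h4 : marg f EZ (Y :|: X) <= marg f EZ Y.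
  by apply: (@marg_dim R V f f_mono f_sub); rewrite subsetUl.
have h5 : f (W :|: EZ) <= f (Y :|: X :|: EZ).
  by apply: f_mono; apply: setSU; rewrite -e3 subsetUl.
have gY := ler_wpM2l g0 hYW.
have part1 : marg f EZ W <= alpha_next * f W.
  move: h3 h4 h5 hX gY h2; rewrite /marg e3 /alpha_next -/g => h3 h4 h5 hX' gY h2'.
  have aX := ler_wpM2l halpha fXW.
  rewrite mulrDl; lra.
split => //.
have an0 : 0 <= alpha_next by rewrite /alpha_next -/g addr_ge0 // mulr_ge0 // addr_ge0.
set U := (Z :\: EZ) :|: (Y :\: EY) :|: X.
have eU : U = (Z :\: EZ) :|: W by rewrite /U /W setUA.
have hZU : f Z <= f (U :|: EZ).
  apply: f_mono; apply/subsetP => x xZ; rewrite /U !inE xZ.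
  by case: (x \in EZ); rewrite /= ?orbT.
have hUW : marg f EZ U <= marg f EZ W by apply: (@marg_dim R V f f_mono f_sub); rewrite eU subsetUr.
have fWU : f W <= f U by apply: f_mono; rewrite eU subsetUr.
have aW := ler_wpM2l an0 fWU.
have hfin : f Z <= (1 + alpha_next) * f U.
  move: hUW part1; rewrite /marg => hUW p1; lra.
have := ler_wpM2l (_ : 0 <= (1 + alpha_next)^-1) hfin.
rewrite mulrA mulVf ?mul1r; last by rewrite gt_eqF //; lra.
apply; rewrite invr_ge0; lra.
Qed.
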